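(* For any algebra $(A,\to,1)$ of type $(2,0)$, it satisfies (Re), (Ex) and (An) if and only if it satisfies (Re), (M), (Ex) and (An).
   Context: Properties, required for all $x,y,z\in A$: (Re) $x\to x=1$; (M) $1\to x=x$; (Ex) $x\to(y\to z)=y\to(x\to z)$; (An) $x\to y=1$ and $y\to x=1$ imply $x=y$. *)

(* Defs.v *)
Definition prop_Re {A : Type} (imp : A -> A -> A) (one : A) : Prop :=
  forall x : A, imp x x = one.

Definition prop_M {A : Type} (imp : A -> A -> A) (one : A) : Prop :=
  forall x : A, imp one x = x.

Definition prop_Ex {A : Type} (imp : A -> A -> A) : Prop :=
  forall x y z : A, imp x (imp y z) = imp y (imp x z).

Definition prop_An {A : Type} (imp : A -> A -> A) (one : A) : Prop :=
  forall x y : A, imp x y = one -> imp y x = one -> x = y.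

(* Main.v *)
Require Import Defs.

Theorem corollary4p2 (A : Type) (imp : A -> A -> A) (one : A) :
  (prop_Re imp one /\ prop_Ex imp /\ prop_An imp one) <->
  (prop_Re imp one /\ prop_M imp one /\ prop_Ex imp /\ prop_An imp one).
Proof.
  split.
  - intros [Re [Ex An]]. repeat split; try assumption.
    intro x.
    assert (H1 : imp one (imp (imp one x) x) = one).
    { rewrite Ex. apply Re. }
    set (w := imp (imp one x) x) in *.
    assert (H2 : imp w one = one).
    { transitivity (imp w (imp one w)); [rewrite H1; reflexivity|]. rewrite Ex, Re. apply Re. }
    assert (Hw : w = one) by (apply An; assumption).
    symmetry. apply An.
    + rewrite Ex, Re. apply Re.
    + exact Hw.
  - intros [Re [M [Ex An]]]. auto.
Qed.
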